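(* Let $1\le m<n$. (a) If $m=1$, then for every $A\in\mathbb R^{1\times n}$ and all $0<p,q\le\infty$: $\mathrm{pginv}_{\mathrm{row}(p,q)}(A)=\mathrm{ginv}_q(A)$; consequently there is a full-rank $A_1\in\mathbb R^{1\times n}$ with $A_1^\dagger\in\mathrm{pginv}_{\mathrm{row}(p,q)}(A_1)\iff q=2$ for $0<p\le\infty$, $0<q<\infty$. (b) If $m\ge2$, there exists a full-rank $A_4\in\mathbb R^{m\times n}$ such that for all $1\le p<\infty$ and $0<q<\infty$: $A_4^\dagger\in\mathrm{pginv}_{\mathrm{row}(p,q)}(A_4)\iff q=2$. (c) If $m\ge3$, there exists a full-rank $A_5\in\mathbb R^{m\times n}$ such that for all $1\le p<\infty$ and $q=2$: $A_5^\dagger\in\mathrm{pginv}_{\mathrm{row}(p,2)}(A_5)\iff p=2$. (d) If $m\ge3$, $1\le p<\infty$ and $0<q<\infty$, then: $A^\dagger\in\mathrm{pginv}_{\mathrm{row}(p,q)}(A)$ for every full-rank $A\in\mathbb R^{m\times n}$ if and only if $(p,q)=(2,2)$.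
   Context: Generalized inverses are taken real: $\mathcal G(A)=\{X\in\mathbb R^{n\times m}:AX=I_m\}$, $\mathrm{ginv}_\nu(A)=\arg\min_{X\in\mathcal G(A)}\|X\|_\nu$, $\mathrm{pginv}_\mu(A)=\arg\min_{X\in\mathcal G(A)}\|XA\|_\mu$ (sets). For $M$ with rows $m^i$, $\|M\|_{\mathrm{row}(p,q)}=(\sum_i\|m^i\|_p^q)^{1/q}$ (maximum for $q=\infty$); entrywise $\|M\|_q=\|\mathrm{vec}(M)\|_q$. $A^\dagger=A^\top(AA^\top)^{-1}$. *)

(* Defs.v *)
From Stdlib Require Import Reals Lra Lia Arith ClassicalEpsilon.
Open Scope R_scope.

(* Matrices are functions nat -> nat -> R; only entries with indices in
   range (given by explicit dimensions) are ever inspected. *)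
Definition mat := nat -> nat -> R.

Fixpoint sumR (k : nat) (f : nat -> R) : R :=
  match k with O => 0 | S k' => sumR k' f + f k' end.

(* max_{i<k} f i (0 for k = 0; used only on nonnegative values) *)
Fixpoint maxR (k : nat) (f : nat -> R) : R :=
  match k with O => 0 | S k' => Rmax (maxR k' f) (f k') end.

Definition rpow (x y : R) : R := if Rlt_dec 0 x then Rpower x y else 0.

(* exponents in (0, infinity] *)
Inductive ext : Type := Fin (p : R) | Inf.
Definition ext_pos (p : ext) : Prop :=
  match p with Fin p => 0 < p | Inf => True end.

Definition vnorm (k : nat) (v : nat -> R) (p : ext) : R :=
  match p with
  | Fin p => rpow (sumR k (fun i => rpow (Rabs (v i)) p)) (/ p)
  | Inf => maxR k (fun i => Rabs (v i))
  end.

Definition rownorm (r c : nat) (M : mat) (p q : ext) : R :=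
  vnorm r (fun i => vnorm c (M i) p) q.

Definition entnorm (r c : nat) (M : mat) (q : ext) : R :=
  vnorm (r * c) (fun k => M (Nat.div k c) (Nat.modulo k c)) q.

Definition mmul (k : nat) (A B : mat) : mat :=
  fun i j => sumR k (fun l => A i l * B l j).

Definition tr (A : mat) : mat := fun i j => A j i.

Definition idm : mat := fun i j => if Nat.eqb i j then 1 else 0.

Definition in_G (m n : nat) (A X : mat) : Prop :=
  forall i j, (i < m)%nat -> (j < m)%nat -> mmul n A X i j = idm i j.

Definition in_ginv (m n : nat) (A : mat) (nu : mat -> R) (X : mat) : Prop :=
  in_G m n A X /\ forall Y, in_G m n A Y -> nu X <= nu Y.

Definition in_pginv (m n : nat) (A : mat) (mu : mat -> R) (X : mat) : Prop :=
  in_G m n A X /\ forall Y, in_G m n A Y -> mu (mmul m X A) <= mu (mmul m Y A).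

Definition full_rank (m n : nat) (A : mat) : Prop :=
  forall c : nat -> R,
    (forall j, (j < n)%nat -> sumR m (fun i => c i * A i j) = 0) ->
    forall i, (i < m)%nat -> c i = 0.

(* inverse of a k x k matrix (a right inverse; meaningful when invertible) *)
Definition minv (k : nat) (M : mat) : mat :=
  epsilon (inhabits (fun _ _ => 0))
    (fun W => forall i j, (i < k)%nat -> (j < k)%nat -> mmul k M W i j = idm i j).

Definition dagger (m n : nat) (A : mat) : mat :=
  mmul m (tr A) (minv m (mmul n A (tr A))).

Definition rowN (n : nat) (p q : ext) : mat -> R := fun M => rownorm n n M p q.
Definition entN (n m : nat) (q : ext) : mat -> R := fun X => entnorm n m X q.

(* Main.v *)
Require Import Defs.
From Stdlib Require Import Reals Lra Lia Arith ClassicalEpsilon.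
Open Scope R_scope.

Lemma sumR_ext k f g : (forall i, (i < k)%nat -> f i = g i) -> sumR k f = sumR k g.
Proof. induction k; simpl; intros H; auto. rewrite IHk by (intros; apply H; lia). rewrite H by lia. auto. Qed.

Lemma sumR_plus k f g : sumR k (fun i => f i + g i) = sumR k f + sumR k g.
Proof. induction k; simpl; [lra|]. rewrite IHk; lra. Qed.

Lemma sumR_minus k f g : sumR k (fun i => f i - g i) = sumR k f - sumR k g.
Proof. induction k; simpl; [lra|]. rewrite IHk; lra. Qed.

Lemma sumR_scal k c f : sumR k (fun i => c * f i) = c * sumR k f.
Proof. induction k; simpl; [lra|]. rewrite IHk; lra. Qed.

Lemma sumR_scal_r k c f : sumR k (fun i => f i * c) = sumR k f * c.
Proof. induction k; simpl; [lra|]. rewrite IHk; lra. Qed.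

Lemma sumR_zero k f : (forall i, (i < k)%nat -> f i = 0) -> sumR k f = 0.
Proof. intros H. rewrite (sumR_ext k f (fun _ => 0)) by auto. induction k; simpl; [lra|]. rewrite IHk; [lra|]. intros; apply H; lia. Qed.

Lemma sumR_le k f g : (forall i, (i < k)%nat -> f i <= g i) -> sumR k f <= sumR k g.
Proof. induction k; simpl; intros H; [lra|]. pose proof (H k ltac:(lia)). pose proof (IHk ltac:(intros; apply H; lia)). lra. Qed.

Lemma sumR_nonneg k f : (forall i, (i < k)%nat -> 0 <= f i) -> 0 <= sumR k f.
Proof. intros H. pose proof (sumR_le k (fun _ => 0) f H). rewrite sumR_zero in H0 by auto. lra. Qed.

Lemma sumR_swap a b f : sumR a (fun i => sumR b (fun j => f i j)) = sumR b (fun j => sumR a (fun i => f i j)).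
Proof. induction a; simpl. - symmetry; apply sumR_zero; auto. - rewrite IHa. rewrite <- sumR_plus. auto. Qed.

Lemma sumR_split k a f : (a <= k)%nat -> sumR k f = sumR a f + sumR (k - a) (fun i => f (a + i)%nat).
Proof.
  intros H. induction k.
  - assert (a = 0)%nat by lia. subst. simpl. lra.
  - destruct (Nat.eq_dec a (S k)).
    + subst. replace (S k - S k)%nat with 0%nat by lia. change (sumR 0 (fun i => f (S k + i)%nat)) with 0. lra.
    + replace (S k - a)%nat with (S (k - a)) by lia. cbn [sumR]. rewrite IHk by lia.
      replace (a + (k - a))%nat with k by lia. lra.
Qed.

Lemma sumR_single k i0 f : (i0 < k)%nat -> (forall i, (i < k)%nat -> i <> i0 -> f i = 0) -> sumR k f = f i0.
Proof.
  intros Hi H. induction k; [lia|]. simpl. destruct (Nat.eq_dec i0 k).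
  - subst. rewrite sumR_zero. lra. intros; apply H; lia.
  - rewrite IHk by (try lia; intros; apply H; lia). rewrite (H k) by lia. lra.
Qed.

Lemma sumR_trunc k b f : (b <= k)%nat -> (forall i, (b <= i)%nat -> (i < k)%nat -> f i = 0) -> sumR k f = sumR b f.
Proof. intros Hb H. rewrite (sumR_split k b f Hb). rewrite (sumR_zero (k-b)). lra. intros; apply H; lia. Qed.

Lemma sumR_term_le k f i0 : (forall i, (i < k)%nat -> 0 <= f i) -> (i0 < k)%nat -> f i0 <= sumR k f.
Proof.
  intros H Hi. induction k; [lia|]. simpl. destruct (Nat.eq_dec i0 k).
  - subst. pose proof (sumR_nonneg k f ltac:(intros; apply H; lia)). lra.
  - pose proof (IHk ltac:(intros; apply H; lia) ltac:(lia)). pose proof (H k ltac:(lia)). lra.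
Qed.

Lemma maxR_nonneg k f : 0 <= maxR k f.
Proof. induction k; simpl; [lra|]. apply Rle_trans with (maxR k f); auto. apply Rmax_l. Qed.

Lemma maxR_ge k f i : (i < k)%nat -> f i <= maxR k f.
Proof. induction k; intros H; [lia|]. simpl. destruct (Nat.eq_dec i k).
  - subst. apply Rmax_r. - apply Rle_trans with (maxR k f). apply IHk; lia. apply Rmax_l. Qed.

Lemma maxR_lub k f c : 0 <= c -> (forall i, (i < k)%nat -> f i <= c) -> maxR k f <= c.
Proof. induction k; simpl; intros Hc H; auto. apply Rmax_lub. apply IHk; auto. apply H; lia. Qed.

Lemma maxR_ext k f g : (forall i, (i < k)%nat -> f i = g i) -> maxR k f = maxR k g.
Proof. induction k; simpl; intros H; auto. rewrite IHk by (intros; apply H; lia). rewrite H by lia. auto. Qed.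

Lemma maxR_le k f g : (forall i, (i < k)%nat -> f i <= g i) -> maxR k f <= maxR k g.
Proof. induction k; simpl; intros H; [lra|]. apply Rmax_lub.
  - apply Rle_trans with (maxR k g). apply IHk; intros; apply H; lia. apply Rmax_l.
  - apply Rle_trans with (g k). apply H; lia. apply Rmax_r. Qed.

Lemma maxR_scal k c f : 0 <= c -> maxR k (fun i => c * f i) = c * maxR k f.
Proof. intros Hc. induction k; simpl; [lra|]. rewrite IHk. apply RmaxRmult; auto. Qed.

Lemma rpow_nonneg x y : 0 <= rpow x y.
Proof. unfold rpow. destruct (Rlt_dec 0 x). unfold Rpower. left; apply exp_pos. lra. Qed.

Lemma rpow_pos x y : 0 < x -> rpow x y = Rpower x y.
Proof. unfold rpow. destruct (Rlt_dec 0 x); lra. Qed.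

Lemma rpow_pos_lt x y : 0 < x -> 0 < rpow x y.
Proof. intros. rewrite rpow_pos by auto. unfold Rpower; apply exp_pos. Qed.

Lemma rpow_zero x y : x <= 0 -> rpow x y = 0.
Proof. unfold rpow. destruct (Rlt_dec 0 x); lra. Qed.

Lemma rpow_le x z y : 0 < y -> 0 <= x -> x <= z -> rpow x y <= rpow z y.
Proof.
  intros Hy Hx Hxz. destruct (Req_dec x 0).
  - subst. rewrite rpow_zero by lra. apply rpow_nonneg.
  - rewrite !rpow_pos by lra. apply Rle_Rpower_l; lra.
Qed.

Lemma rpow_lt x z y : 0 < y -> 0 <= x -> x < z -> rpow x y < rpow z y.
Proof.
  intros Hy Hx Hxz. destruct (Req_dec x 0).
  - subst. rewrite rpow_zero by lra. apply rpow_pos_lt; lra.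
  - rewrite !rpow_pos by lra. apply Rlt_Rpower_l; lra.
Qed.

Lemma rpow_le_inv x z y : 0 < y -> 0 <= x -> 0 <= z -> rpow x y <= rpow z y -> x <= z.
Proof. intros. destruct (Rle_lt_dec x z); auto. pose proof (rpow_lt z x y); lra. Qed.

Lemma rpow_lt_inv x z y : 0 < y -> 0 <= x -> 0 <= z -> rpow x y < rpow z y -> x < z.
Proof. intros. destruct (Rlt_le_dec x z); auto. pose proof (rpow_le z x y); lra. Qed.

Lemma rpow_rpow x y z : 0 <= x -> rpow (rpow x y) z = rpow x (y * z).
Proof.
  intros Hx. destruct (Req_dec x 0).
  - subst. rewrite (rpow_zero 0) by lra. rewrite rpow_zero by lra. rewrite rpow_zero; lra.
  - rewrite (rpow_pos x y) by lra. rewrite rpow_pos by (unfold Rpower; apply exp_pos).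
    rewrite rpow_pos by lra. apply Rpower_mult.
Qed.

Lemma rpow_1 x : 0 <= x -> rpow x 1 = x.
Proof. intros. destruct (Req_dec x 0). subst; apply rpow_zero; lra. rewrite rpow_pos by lra. apply Rpower_1; lra. Qed.

Lemma rpow_inv_r x p : 0 <= x -> 0 < p -> rpow (rpow x p) (/ p) = x.
Proof. intros. rewrite rpow_rpow by auto. rewrite Rinv_r by lra. apply rpow_1; auto. Qed.

Lemma rpow_inv_l x p : 0 <= x -> 0 < p -> rpow (rpow x (/p)) p = x.
Proof. intros. rewrite rpow_rpow by auto. rewrite Rinv_l by lra. apply rpow_1; auto. Qed.

Lemma rpow_mult x z y : 0 <= x -> 0 <= z -> rpow (x * z) y = rpow x y * rpow z y.
Proof.
  intros Hx Hz. destruct (Req_dec x 0). subst. rewrite Rmult_0_l, !(rpow_zero 0) by lra. lra.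
  destruct (Req_dec z 0). subst. rewrite Rmult_0_r, !(rpow_zero 0) by lra. lra.
  rewrite !rpow_pos by (try apply Rmult_lt_0_compat; lra). symmetry; apply Rpower_mult_distr; lra.
Qed.

Lemma rpow_2 x : 0 <= x -> rpow x 2 = x * x.
Proof. intros. destruct (Req_dec x 0). subst. rewrite rpow_zero; lra.
  rewrite rpow_pos by lra. replace 2 with (INR 2) by (simpl; lra). rewrite Rpower_pow by lra. simpl; lra. Qed.

Lemma rpow_one y : rpow 1 y = 1.
Proof. rewrite rpow_pos by lra. unfold Rpower. rewrite ln_1, Rmult_0_r. apply exp_0. Qed.

Lemma vnorm_nonneg k v p : 0 <= vnorm k v p.
Proof. destruct p; simpl. apply rpow_nonneg. apply maxR_nonneg. Qed.

Lemma vnorm_ext k v w p : (forall i, (i < k)%nat -> v i = w i) -> vnorm k v p = vnorm k w p.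
Proof. intros H. destruct p; simpl. f_equal. apply sumR_ext. intros. rewrite H; auto.
  apply maxR_ext. intros; rewrite H; auto. Qed.

Lemma vnorm_ext_abs k v w p : (forall i, (i < k)%nat -> Rabs (v i) = Rabs (w i)) -> vnorm k v p = vnorm k w p.
Proof. intros H. destruct p; simpl. f_equal. apply sumR_ext. intros. rewrite H; auto.
  apply maxR_ext. intros; rewrite H; auto. Qed.

Lemma vnorm_mono k v w p : ext_pos p -> (forall i, (i < k)%nat -> Rabs (v i) <= Rabs (w i)) -> vnorm k v p <= vnorm k w p.
Proof.
  intros Hp H. destruct p; simpl in *.
  - apply rpow_le. apply Rinv_0_lt_compat; auto. apply sumR_nonneg; intros; apply rpow_nonneg.
    apply sumR_le. intros. apply rpow_le; auto. apply Rabs_pos.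
  - apply maxR_le; auto.
Qed.

Lemma vnorm_scal k c v p : ext_pos p -> vnorm k (fun i => c * v i) p = Rabs c * vnorm k v p.
Proof.
  intros Hp. destruct p; simpl in *.
  - rewrite (sumR_ext k _ (fun i => rpow (Rabs c) p * rpow (Rabs (v i)) p)).
    + rewrite sumR_scal. rewrite rpow_mult by (try apply rpow_nonneg; try apply Rabs_pos; apply sumR_nonneg; intros; apply rpow_nonneg).
      rewrite rpow_inv_r; auto. apply Rabs_pos.
    + intros. rewrite Rabs_mult. apply rpow_mult; apply Rabs_pos.
  - rewrite (maxR_ext k _ (fun i => Rabs c * Rabs (v i))). apply maxR_scal; apply Rabs_pos.
    intros; apply Rabs_mult.
Qed.

Lemma vnorm_pos k v p i : ext_pos p -> (i < k)%nat -> v i <> 0 -> 0 < vnorm k v p.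
Proof.
  intros Hp Hi Hv. destruct p; simpl in *.
  - apply rpow_pos_lt. eapply Rlt_le_trans. 2: apply (sumR_term_le k _ i); auto.
    apply rpow_pos_lt. apply Rabs_pos_lt; auto. intros; apply rpow_nonneg.
  - eapply Rlt_le_trans. 2: apply (maxR_ge k _ i); auto. apply Rabs_pos_lt; auto.
Qed.

Lemma vnorm_zero k v p : (forall i, (i < k)%nat -> v i = 0) -> vnorm k v p = 0.
Proof.
  intros H. destruct p; simpl.
  - rewrite sumR_zero. apply rpow_zero; lra. intros. rewrite H, Rabs_R0 by auto. apply rpow_zero; lra.
  - apply Rle_antisym. apply maxR_lub. lra. intros. rewrite H, Rabs_R0; auto; lra. apply maxR_nonneg.
Qed.

Module MC.
From mathcomp Require Import all_boot all_algebra.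
From mathcomp Require Import Rstruct.
Import GRing.Theory.
Local Open Scope ring_scope.

Lemma sumR_big k (f : nat -> R) : sumR k f = \sum_(i < k) f i.
Proof.
elim: k => [|k IH]; first by rewrite big_ord0.
by rewrite big_ord_recr /= IH.
Qed.

Lemma rinv_exists k (M : mat) :
  (forall x : nat -> R, (forall j, Peano.lt j k -> sumR k (fun i => Rmult (x i) (M i j)) = IZR Z0) ->
      forall i, Peano.lt i k -> x i = IZR Z0) ->
  exists W : mat, forall i j, Peano.lt i k -> Peano.lt j k -> mmul k M W i j = idm i j.
Proof.
case: k => [|k] H.
  by exists (fun _ _ => 0) => i j /ltP.
pose B : 'M[R]_k.+1 := \matrix_(i, j) M i j.
have fr : row_free B.
  rewrite -kermx_eq0; apply/eqP/row_matrixP => a; rewrite row0.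
  pose r := row a (kermx B).
  have rB : r *m B = 0 by rewrite /r -row_mul mulmx_ker row0.
  rewrite -/r; apply/rowP => b; rewrite [RHS]mxE.
  pose xf := fun c : nat => r 0 (inord c).
  have Hx := H xf.
  have : xf b = 0.
    apply: Hx; last by apply/ltP; apply: ltn_ord.
    move=> j /ltP lt_j.
    rewrite sumR_big.
    have := congr1 (fun X : 'M[R]_(1, k.+1) => X 0 (inord j)) rB; rewrite !mxE => E.
    apply: (etrans _ E). apply: eq_bigr => i _. rewrite /xf inord_val [B _ _]mxE inordK //.
  by rewrite /xf inord_val.
have /row_freeP [C BC] := fr.
exists (fun a b => C (inord a) (inord b)) => i j /ltP lt_i /ltP lt_j.
rewrite /mmul sumR_big.
have := congr1 (fun X : 'M[R]_(k.+1) => X (inord i) (inord j)) BC; rewrite !mxE.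
move=> E.
transitivity ((inord i == inord j :> 'I_k.+1)%:R : R).
  rewrite -E; apply: eq_bigr => l _; rewrite !mxE inord_val inordK //.
rewrite /idm.
have -> : (inord i == inord j :> 'I_k.+1) = (i == j).
  by apply/eqP/eqP => [/(congr1 val)|->//]; rewrite /= !inordK.
case: (Nat.eqb_spec i j) => [->|/eqP ne]; first by rewrite eqxx.
by rewrite (negbTE ne).
Qed.
End MC.

Lemma mmul_assoc a b X Y Z i j :
  mmul b (mmul a X Y) Z i j = mmul a X (mmul b Y Z) i j.
Proof.
  unfold mmul.
  rewrite (sumR_ext b _ (fun l => sumR a (fun k => X i k * Y k l * Z l j))).
  2:{ intros. rewrite <- sumR_scal_r. auto. }
  rewrite sumR_swap. apply sumR_ext. intros. rewrite <- sumR_scal. apply sumR_ext. intros; ring.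
Qed.

Lemma mmul_minus k X Y Z i j :
  mmul k X Z i j - mmul k Y Z i j = mmul k (fun a b => X a b - Y a b) Z i j.
Proof. unfold mmul. rewrite <- sumR_minus. apply sumR_ext; intros; ring. Qed.

Lemma mmul_minus_r k X Y Z i j :
  mmul k Z X i j - mmul k Z Y i j = mmul k Z (fun a b => X a b - Y a b) i j.
Proof. unfold mmul. rewrite <- sumR_minus. apply sumR_ext; intros; ring. Qed.

Lemma mmul_ext_l k X X' Z i j : (forall l, (l < k)%nat -> X i l = X' i l) -> mmul k X Z i j = mmul k X' Z i j.
Proof. intros H. unfold mmul. apply sumR_ext. intros. rewrite H; auto. Qed.

Lemma mmul_ext_r k X Z Z' i j : (forall l, (l < k)%nat -> Z l j = Z' l j) -> mmul k X Z i j = mmul k X Z' i j.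
Proof. intros H. unfold mmul. apply sumR_ext. intros. rewrite H; auto. Qed.

Lemma mmul_idm_l k X i j : (i < k)%nat -> mmul k idm X i j = X i j.
Proof.
  intros Hi. unfold mmul. rewrite (sumR_single k i). unfold idm. rewrite Nat.eqb_refl. ring. auto.
  intros l _ Hl. unfold idm. destruct (Nat.eqb_spec i l). congruence. ring.
Qed.

Lemma mmul_idm_r k X i j : (j < k)%nat -> mmul k X idm i j = X i j.
Proof.
  intros Hi. unfold mmul. rewrite (sumR_single k j). unfold idm. rewrite Nat.eqb_refl. ring. auto.
  intros l _ Hl. unfold idm. destruct (Nat.eqb_spec l j). congruence. ring.
Qed.

Lemma minv_right k M : (exists W : mat, forall i j, (i < k)%nat -> (j < k)%nat -> mmul k M W i j = idm i j) ->
  forall i j, (i < k)%nat -> (j < k)%nat -> mmul k M (minv k M) i j = idm i j.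
Proof.
  intros H. unfold minv.
  apply (epsilon_spec (inhabits (fun _ _ => 0)) (fun W => forall i j, (i < k)%nat -> (j < k)%nat -> mmul k M W i j = idm i j) H).
Qed.

Lemma minv_unique k M W :
  (forall i j, (i < k)%nat -> (j < k)%nat -> mmul k M W i j = idm i j) ->
  (forall i j, (i < k)%nat -> (j < k)%nat -> mmul k W M i j = idm i j) ->
  forall i j, (i < k)%nat -> (j < k)%nat -> minv k M i j = W i j.
Proof.
  intros H1 H2 i j Hi Hj.
  assert (Hm := minv_right k M (ex_intro _ W H1)).
  transitivity (mmul k (mmul k W M) (minv k M) i j).
  - rewrite (mmul_ext_l k _ idm) by (intros; apply H2; auto). rewrite mmul_idm_l; auto.
  - rewrite mmul_assoc. rewrite (mmul_ext_r k _ _ idm) by (intros; apply Hm; auto). apply mmul_idm_r; auto.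
Qed.

Lemma sumsq_zero k f : sumR k (fun i => f i * f i) = 0 -> forall i, (i < k)%nat -> f i = 0.
Proof.
  intros H i Hi.
  assert (f i * f i <= 0).
  { rewrite <- H. apply (sumR_term_le k (fun i => f i * f i)); auto. intros; nra. }
  nra.
Qed.

Lemma full_rank_inv m n A : full_rank m n A ->
  exists W : mat, forall i j, (i < m)%nat -> (j < m)%nat -> mmul m (mmul n A (tr A)) W i j = idm i j.
Proof.
  intros Hf. apply MC.rinv_exists. intros x Hx.
  apply Hf. apply (sumsq_zero n (fun l => sumR m (fun i => x i * A i l))).
  rewrite (sumR_ext n _ (fun l => sumR m (fun j => x j * sumR m (fun i => x i * A i l * A j l)))).
  2:{ intros l Hl. cbv beta. rewrite <- sumR_scal_r. apply sumR_ext. intros j Hj.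
      rewrite <- !sumR_scal. apply sumR_ext; intros; ring. }
  rewrite sumR_swap. apply sumR_zero. intros j Hj.
  rewrite sumR_scal. rewrite sumR_swap.
  rewrite (sumR_ext m _ (fun i => x i * mmul n A (tr A) i j)).
  rewrite (Hx j Hj). ring.
  intros. unfold mmul, tr. rewrite <- sumR_scal. apply sumR_ext; intros; ring.
Qed.

Lemma dagger_right m n A : full_rank m n A ->
  in_G m n A (dagger m n A).
Proof.
  intros Hf i j Hi Hj. unfold dagger. rewrite <- mmul_assoc.
  apply minv_right; auto. apply full_rank_inv; auto.
Qed.

Definition fro (n : nat) (M : mat) : R := sumR n (fun i => sumR n (fun j => M i j * M i j)).

Lemma rowN22 n M : rowN n (Fin 2) (Fin 2) M = rpow (fro n M) (/2).
Proof.
  unfold rowN, rownorm, fro. simpl. f_equal. apply sumR_ext. intros i Hi.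
  rewrite Rabs_pos_eq by apply rpow_nonneg.
  rewrite rpow_inv_l; try lra. 2:{ apply sumR_nonneg; intros; apply rpow_nonneg. }
  apply sumR_ext. intros. rewrite rpow_2 by apply Rabs_pos.
  rewrite <- Rabs_mult. rewrite Rabs_pos_eq; auto. nra.
Qed.

Lemma dagger_fro_opt m n A Y : full_rank m n A -> in_G m n A Y ->
  fro n (mmul m (dagger m n A) A) <= fro n (mmul m Y A).
Proof.
  intros Hf HY. set (D := dagger m n A). set (Z := fun a b => Y a b - D a b).
  assert (HD : in_G m n A D) by (apply dagger_right; auto).
  set (E := mmul m Z A).
  assert (HE : forall i j, mmul m Y A i j = mmul m D A i j + E i j).
  { intros. unfold E, Z. rewrite <- mmul_minus. ring. }
  assert (Hcross : sumR n (fun i => sumR n (fun j => mmul m D A i j * E i j)) = 0).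
  { set (W := minv m (mmul n A (tr A))).
    rewrite (sumR_ext n _ (fun i => sumR n (fun j => sumR m (fun a => A a i * mmul m W A a j * E i j)))).
    2:{ intros i Hi. apply sumR_ext. intros j Hj. unfold D, dagger. fold W. rewrite mmul_assoc.
        unfold mmul at 1. rewrite <- sumR_scal_r. apply sumR_ext. intros. unfold tr. ring. }
    rewrite (sumR_ext n _ (fun i => sumR m (fun a => sumR n (fun j => A a i * mmul m W A a j * E i j))))
      by (intros; apply sumR_swap).
    rewrite sumR_swap. apply sumR_zero. intros a Ha.
    rewrite sumR_swap. apply sumR_zero. intros j Hj.
    rewrite (sumR_ext n _ (fun i => mmul m W A a j * (A a i * E i j))) by (intros; ring).
    rewrite sumR_scal.
    assert (H0 : sumR n (fun i => A a i * E i j) = 0).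
    { change (sumR n (fun i => A a i * E i j)) with (mmul n A E a j). unfold E.
      rewrite <- mmul_assoc. apply sumR_zero. intros l Hl.
      unfold Z. cbv beta. rewrite <- mmul_minus_r. rewrite HY, HD by auto. ring. }
    rewrite H0; ring. }
  unfold fro.
  rewrite (sumR_ext n (fun i => sumR n (fun j => mmul m Y A i j * mmul m Y A i j))
     (fun i => sumR n (fun j => mmul m D A i j * mmul m D A i j) + (2 * sumR n (fun j => mmul m D A i j * E i j) + sumR n (fun j => E i j * E i j)))).
  2:{ intros. rewrite <- sumR_scal, <- !sumR_plus. apply sumR_ext. intros. rewrite HE. ring. }
  rewrite sumR_plus, sumR_plus, sumR_scal, Hcross.
  assert (0 <= sumR n (fun i => sumR n (fun j => E i j * E i j))).
  { apply sumR_nonneg; intros; apply sumR_nonneg; intros; nra. }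
  lra.
Qed.

Lemma dagger_opt22 m n A : full_rank m n A ->
  in_pginv m n A (rowN n (Fin 2) (Fin 2)) (dagger m n A).
Proof.
  intros Hf. split. apply dagger_right; auto.
  intros Y HY. rewrite !rowN22. apply rpow_le. lra.
  apply sumR_nonneg; intros; apply sumR_nonneg; intros; nra.
  apply dagger_fro_opt; auto.
Qed.

Lemma deriv_descent f x l d : derivable_pt_lim f x l -> l <> 0 -> 0 < d ->
  exists y, Rabs (y - x) < d /\ f y < f x.
Proof.
  intros Hd Hl Hdpos.
  assert (He : 0 < Rabs l / 2) by (apply Rabs_pos_lt in Hl; lra).
  destruct (Hd _ He) as [del Hdel].
  set (h0 := Rmin del d / 2).
  assert (Hh0 : 0 < h0). { unfold h0. pose proof (cond_pos del). assert (0 < Rmin del d) by (apply Rmin_glb_lt; lra). lra. }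
  assert (Hh0d : h0 < del /\ h0 < d).
  { unfold h0. pose proof (Rmin_l del d). pose proof (Rmin_r del d). pose proof (cond_pos del). split.
    - assert (0 < Rmin del d) by (apply Rmin_glb_lt; lra). lra.
    - assert (0 < Rmin del d) by (apply Rmin_glb_lt; lra). lra. }
  destruct (Rlt_le_dec 0 l) as [Lp|Ln].
  - exists (x + - h0). split.
    + replace (x + - h0 - x) with (- h0) by ring. rewrite Rabs_Ropp, Rabs_pos_eq; lra.
    + specialize (Hdel (- h0) ltac:(lra) ltac:(rewrite Rabs_Ropp, Rabs_pos_eq; lra)).
      rewrite Rabs_pos_eq in He by lra. rewrite (Rabs_pos_eq l) in Hdel by lra.
      apply Rabs_def2 in Hdel. destruct Hdel as [H1 H2].
      assert (Q : 0 < (f (x + - h0) - f x) / - h0) by lra.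
      unfold Rdiv in Q. rewrite <- Ropp_inv_permute in Q by lra.
      assert (0 < / h0) by (apply Rinv_0_lt_compat; lra).
      assert ((f (x + - h0) - f x) * / h0 < 0) by nra.
      assert (f (x + - h0) - f x < 0). { apply Rmult_lt_reg_r with (/ h0); auto. lra. }
      lra.
  - assert (Ll : l < 0) by lra.
    exists (x + h0). split.
    + replace (x + h0 - x) with h0 by ring. rewrite Rabs_pos_eq; lra.
    + specialize (Hdel h0 ltac:(lra) ltac:(rewrite Rabs_pos_eq; lra)).
      rewrite (Rabs_left l) in Hdel by lra.
      apply Rabs_def2 in Hdel. destruct Hdel as [H1 H2].
      assert (Q : (f (x + h0) - f x) / h0 < 0) by lra.
      unfold Rdiv in Q.
      assert (0 < / h0) by (apply Rinv_0_lt_compat; lra).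
      assert (f (x + h0) - f x < 0). { apply Rmult_lt_reg_r with (/ h0); auto. lra. }
      lra.
Qed.

Lemma vnorm_unit k i p : (i < k)%nat -> ext_pos p -> vnorm k (fun j => if Nat.eqb j i then 1 else 0) p = 1.
Proof.
  intros Hi Hp. destruct p; simpl in *.
  - rewrite (sumR_single k i). rewrite Nat.eqb_refl, Rabs_R1, rpow_one. apply rpow_one. auto.
    intros j _ Hj. destruct (Nat.eqb_spec j i); [congruence|]. rewrite Rabs_R0. apply rpow_zero; lra.
  - apply Rle_antisym.
    + apply maxR_lub. lra. intros j _. destruct (Nat.eqb j i); rewrite ?Rabs_R1, ?Rabs_R0; lra.
    + pose proof (maxR_ge k (fun j => Rabs (if Nat.eqb j i then 1 else 0)) i Hi). simpl in H.
      rewrite Nat.eqb_refl, Rabs_R1 in H. auto.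
Qed.

Lemma rowN_fin n p q M : rowN n p (Fin q) M = rpow (sumR n (fun i => rpow (vnorm n (M i) p) q)) (/ q).
Proof. unfold rowN, rownorm. simpl. f_equal. apply sumR_ext. intros. rewrite Rabs_pos_eq; auto. apply vnorm_nonneg. Qed.

Lemma rowN_ext_rows n p q M M' : (forall i j, (i < n)%nat -> (j < n)%nat -> M i j = M' i j) -> rowN n p q M = rowN n p q M'.
Proof. intros H. unfold rowN, rownorm. apply vnorm_ext. intros. apply vnorm_ext. intros. auto. Qed.

Lemma obj_ext m n p q A X X' : (forall i l, (i < n)%nat -> (l < m)%nat -> X i l = X' i l) ->
  rowN n p q (mmul m X A) = rowN n p q (mmul m X' A).
Proof. intros H. apply rowN_ext_rows. intros. apply mmul_ext_l. intros; auto. Qed.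

Lemma inG_ext m n A X X' : (forall l j, (l < n)%nat -> (j < m)%nat -> X l j = X' l j) -> in_G m n A X -> in_G m n A X'.
Proof. intros H HX i j Hi Hj. rewrite <- (HX i j Hi Hj). apply mmul_ext_r. intros; symmetry; auto. Qed.

Lemma in_pginv_ext m n A mu X X' : (forall l j, (l < n)%nat -> (j < m)%nat -> X l j = X' l j) ->
  (forall Y Y', (forall l j, (l < n)%nat -> (j < m)%nat -> Y l j = Y' l j) -> mu (mmul m Y A) = mu (mmul m Y' A)) ->
  in_pginv m n A mu X -> in_pginv m n A mu X'.
Proof.
  intros H Hmu [HG Hopt]. split. eapply inG_ext; eauto.
  intros Y HY. rewrite <- (Hmu X X' H). auto.
Qed.

Definition A4 (i j : nat) : R :=
  match i with
  | O => match j with O => 1 | 1%nat => 2 | _ => 0 end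
  | S _ => if Nat.eqb j (S i) then 1 else 0
  end.

Definition X4 (s : R) (l j : nat) : R :=
  match j with
  | O => match l with O => s | 1%nat => (1 - s) / 2 | _ => 0 end
  | S _ => if Nat.eqb l (S j) then 1 else 0
  end.

Section A4sec.
Variables m n : nat.
Hypothesis Hm : (1 <= m)%nat.
Hypothesis Hmn : (m < n)%nat.

Lemma A4_0l l : (2 <= l)%nat -> A4 0 l = 0.
Proof. intros. unfold A4. destruct l as [|[|]]; auto; lia. Qed.

Lemma A4_Sl k l : A4 (S k) l = if Nat.eqb l (S (S k)) then 1 else 0.
Proof. reflexivity. Qed.

Lemma A4_full : full_rank m n A4.
Proof.
  intros c Hc i Hi.
  destruct i as [|k].
  - specialize (Hc 0%nat ltac:(lia)). rewrite (sumR_single m 0) in Hc.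
    + simpl in Hc. lra.
    + lia.
    + intros [|l] _ H. lia. rewrite A4_Sl; simpl; ring.
  - specialize (Hc (S (S k)) ltac:(lia)). rewrite (sumR_single m (S k)) in Hc; auto.
    + rewrite A4_Sl, Nat.eqb_refl in Hc. lra.
    + intros [|l] _ H. rewrite A4_0l by lia. ring. rewrite A4_Sl.
      destruct (Nat.eqb_spec (S (S k)) (S (S l))). lia. ring.
Qed.

Lemma A4_sum0 (f : nat -> R) : sumR n (fun l => A4 0 l * f l) = f 0%nat + 2 * f 1%nat.
Proof.
  rewrite (sumR_trunc n 2) by (try lia; intros; rewrite A4_0l by lia; ring). simpl. ring.
Qed.

Lemma A4_sumS k (f : nat -> R) : (S k < m)%nat -> sumR n (fun l => A4 (S k) l * f l) = f (S (S k)).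
Proof.
  intros Hk. rewrite (sumR_single n (S (S k))). rewrite A4_Sl, Nat.eqb_refl. ring. lia.
  intros l _ H. rewrite A4_Sl. destruct (Nat.eqb_spec l (S (S k))). congruence. ring.
Qed.

Definition d4 (i : nat) : R := if Nat.eqb i 0 then 5 else 1.
Definition W4 (i j : nat) : R := if Nat.eqb i j then / d4 i else 0.

Lemma M4_eq i j : (i < m)%nat -> (j < m)%nat ->
  mmul n A4 (tr A4) i j = if Nat.eqb i j then d4 i else 0.
Proof.
  intros Hi Hj. unfold mmul, tr. destruct i as [|k].
  - rewrite A4_sum0. unfold d4. destruct j as [|j']. simpl. ring.
    rewrite !A4_Sl. simpl. destruct j'; simpl; ring.
  - rewrite A4_sumS by auto. unfold d4. destruct j as [|j'].
    + rewrite A4_0l by lia. simpl. ring.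
    + rewrite A4_Sl. simpl. destruct (Nat.eqb_spec k j'); destruct (Nat.eqb_spec (S (S k)) (S (S j'))); try lia; ring.
Qed.

Lemma d4_pos i : 0 < d4 i.
Proof. unfold d4. destruct (Nat.eqb i 0); lra. Qed.

Lemma minv4 : forall i j, (i < m)%nat -> (j < m)%nat -> minv m (mmul n A4 (tr A4)) i j = W4 i j.
Proof.
  apply minv_unique.
  - intros i j Hi Hj. unfold mmul at 1. rewrite (sumR_single m j); auto.
    + rewrite M4_eq by auto. unfold W4, idm. rewrite Nat.eqb_refl.
      destruct (Nat.eqb_spec i j). subst. field. apply Rgt_not_eq, d4_pos. ring.
    + intros l Hl H. unfold W4. destruct (Nat.eqb_spec l j). congruence. ring.
  - intros i j Hi Hj. unfold mmul at 1. rewrite (sumR_single m i); auto.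
    + rewrite M4_eq by auto. unfold W4, idm. rewrite Nat.eqb_refl.
      destruct (Nat.eqb_spec i j). subst. field. apply Rgt_not_eq, d4_pos. ring.
    + intros l Hl H. unfold W4. destruct (Nat.eqb_spec i l). congruence. ring.
Qed.

Lemma dagger4 l j : (l < n)%nat -> (j < m)%nat -> dagger m n A4 l j = X4 (1/5) l j.
Proof.
  intros Hl Hj. unfold dagger, mmul at 1.
  rewrite (sumR_ext m _ (fun i => tr A4 l i * W4 i j)) by (intros; rewrite minv4; auto).
  rewrite (sumR_single m j); auto.
  2:{ intros i _ H. unfold W4. destruct (Nat.eqb_spec i j). congruence. ring. }
  unfold W4, tr. rewrite Nat.eqb_refl. unfold d4, X4.
  destruct j as [|j'].
  - simpl. destruct l as [|[|l]]; simpl; field.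
  - simpl. destruct (Nat.eqb l (S (S j'))); field.
Qed.

Lemma X4_G s : in_G m n A4 (X4 s).
Proof.
  intros k j Hk Hj. unfold mmul. destruct k as [|k].
  - rewrite A4_sum0. unfold X4, idm. destruct j as [|j]. simpl. field.
    simpl. destruct j; simpl; ring.
  - rewrite A4_sumS by auto. unfold X4, idm. destruct j as [|j]. simpl. auto.
    simpl. destruct (Nat.eqb_spec k j); destruct (Nat.eqb_spec (S (S k)) (S (S j))); try lia; auto.
Qed.

Lemma dagger4_G : in_G m n A4 (dagger m n A4).
Proof. apply (inG_ext m n A4 (X4 (1/5))). intros; symmetry; apply dagger4; auto. apply X4_G. Qed.

Lemma YA4_01 Y i j : (j <= 1)%nat -> mmul m Y A4 i j = Y i 0%nat * A4 0 j.
Proof.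
  intros Hj. unfold mmul. rewrite (sumR_single m 0). reflexivity. lia.
  intros [|l] _ H. lia. rewrite A4_Sl. destruct (Nat.eqb_spec j (S (S l))). lia. ring.
Qed.

Lemma G4_rows Y k j : in_G m n A4 Y -> (S k < m)%nat -> (j < m)%nat -> Y (S (S k)) j = idm (S k) j.
Proof. intros HY Hk Hj. rewrite <- (HY (S k) j Hk Hj). unfold mmul. rewrite A4_sumS; auto. Qed.

Lemma G4_00 Y : in_G m n A4 Y -> Y 0%nat 0%nat + 2 * Y 1%nat 0%nat = 1.
Proof. intros HY. pose proof (HY 0%nat 0%nat ltac:(lia) ltac:(lia)). unfold mmul in H. rewrite A4_sum0 in H. unfold idm in H. simpl in H. lra. Qed.

Lemma YA4_mid Y i j : in_G m n A4 Y -> (2 <= i <= m)%nat -> mmul m Y A4 i j = if Nat.eqb j i then 1 else 0.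
Proof.
  intros HY Hi. destruct i as [|[|k]]; try lia.
  unfold mmul. rewrite (sumR_single m (S k)).
  - rewrite G4_rows by (auto; lia). unfold idm. rewrite Nat.eqb_refl. rewrite A4_Sl. ring.
  - lia.
  - intros l Hl H. rewrite G4_rows by (auto; lia). unfold idm.
    destruct (Nat.eqb_spec (S k) l). congruence. ring.
Qed.

Definition c4 (p : ext) : R := vnorm n (A4 0%nat) p.

Lemma c4_pos p : ext_pos p -> 0 < c4 p.
Proof. intros. unfold c4. apply (vnorm_pos n _ p 0%nat); auto. lia. simpl. lra. Qed.

Lemma N4_01 Y i p : ext_pos p -> Rabs (Y i 0%nat) * c4 p <= vnorm n (mmul m Y A4 i) p.
Proof.
  intros Hp. unfold c4. rewrite <- vnorm_scal by auto. apply vnorm_mono; auto.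
  intros j Hj. destruct (le_lt_dec j 1). rewrite YA4_01 by auto. lra.
  rewrite A4_0l by lia. rewrite Rmult_0_r, Rabs_R0. apply Rabs_pos.
Qed.

Lemma N4_mid Y i p : ext_pos p -> in_G m n A4 Y -> (2 <= i <= m)%nat -> vnorm n (mmul m Y A4 i) p = 1.
Proof.
  intros Hp HY Hi. rewrite (vnorm_ext n _ (fun j => if Nat.eqb j i then 1 else 0)).
  apply vnorm_unit; auto. lia. intros. apply YA4_mid; auto.
Qed.

Lemma X4A_row0 s j : mmul m (X4 s) A4 0%nat j = s * A4 0%nat j.
Proof.
  unfold mmul. rewrite (sumR_single m 0%nat). reflexivity. lia.
  intros [|l] _ H. lia. unfold X4; simpl; ring.
Qed.

Lemma X4A_row1 s j : mmul m (X4 s) A4 1%nat j = (1 - s) / 2 * A4 0%nat j.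
Proof.
  unfold mmul. rewrite (sumR_single m 0%nat). reflexivity. lia.
  intros [|l] _ H. lia. unfold X4; simpl; destruct l; simpl; ring.
Qed.

Lemma X4A_high s i j : (m < i)%nat -> mmul m (X4 s) A4 i j = 0.
Proof.
  intros Hi. unfold mmul. apply sumR_zero. intros [|l] Hl. unfold X4. destruct i as [|[|]]; try lia; ring.
  unfold X4. destruct (Nat.eqb_spec i (S (S l))). lia. ring.
Qed.

Definition T4 (a b : R) (i : nat) : R :=
  match i with O => a | 1%nat => b | _ => if Nat.leb i m then 1 else 0 end.

Lemma sum_T4 q a b : sumR n (fun i => rpow (T4 a b i) q) =
   rpow a q + rpow b q + sumR (n - 2) (fun i => rpow (T4 0 0 (2 + i)) q).
Proof.
  rewrite (sumR_split n 2) by lia. simpl. f_equal. ring.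
Qed.

Lemma obj4_X s p q : ext_pos p -> 0 < q ->
  rowN n p (Fin q) (mmul m (X4 s) A4) = rpow (sumR n (fun i => rpow (T4 (Rabs s * c4 p) (Rabs ((1 - s) / 2) * c4 p) i) q)) (/ q).
Proof.
  intros Hp Hq. rewrite rowN_fin. f_equal. apply sumR_ext. intros i Hi. f_equal.
  unfold T4. destruct i as [|[|i]].
  - rewrite (vnorm_ext n _ (fun j => s * A4 0%nat j)) by (intros; apply X4A_row0). apply vnorm_scal; auto.
  - rewrite (vnorm_ext n _ (fun j => (1 - s) / 2 * A4 0%nat j)) by (intros; apply X4A_row1). apply vnorm_scal; auto.
  - destruct (Nat.leb_spec (S (S i)) m).
    + apply N4_mid; auto. apply X4_G. lia.
    + apply vnorm_zero. intros. apply X4A_high. lia.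
Qed.

Lemma obj4_Y_ge Y p q : ext_pos p -> 0 < q -> in_G m n A4 Y ->
  rpow (sumR n (fun i => rpow (T4 (Rabs (Y 0%nat 0%nat) * c4 p) (Rabs (Y 1%nat 0%nat) * c4 p) i) q)) (/ q)
  <= rowN n p (Fin q) (mmul m Y A4).
Proof.
  intros Hp Hq HY. rewrite rowN_fin. apply rpow_le. apply Rinv_0_lt_compat; auto.
  apply sumR_nonneg; intros; apply rpow_nonneg.
  apply sumR_le. intros i Hi. apply rpow_le; auto.
  - unfold T4. pose proof (c4_pos p Hp). destruct i as [|[|i]].
    + pose proof (Rabs_pos (Y 0%nat 0%nat)). nra.
    + pose proof (Rabs_pos (Y 1%nat 0%nat)). nra.
    + destruct (Nat.leb (S (S i)) m); lra.
  - unfold T4. destruct i as [|[|i]].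
    + apply N4_01; auto.
    + apply N4_01; auto.
    + destruct (Nat.leb_spec (S (S i)) m).
      * rewrite N4_mid; auto. lra. lia.
      * apply vnorm_nonneg.
Qed.

Lemma A4_q2 p : ext_pos p -> in_pginv m n A4 (rowN n p (Fin 2)) (dagger m n A4).
Proof.
  intros Hp. split. apply dagger4_G.
  intros Y HY.
  rewrite (obj_ext m n p (Fin 2) A4 (dagger m n A4) (X4 (1/5))) by (intros; apply dagger4; auto).
  rewrite obj4_X by (auto; lra).
  eapply Rle_trans. 2: apply obj4_Y_ge; auto; lra.
  apply rpow_le. lra. apply sumR_nonneg; intros; apply rpow_nonneg.
  rewrite !sum_T4.
  pose proof (G4_00 Y HY). pose proof (c4_pos p Hp).
  set (c := c4 p) in *. set (a := Y 0%nat 0%nat) in *. set (b := Y 1%nat 0%nat) in *. clearbody c a b.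
  rewrite !rpow_2 by (try apply Rmult_le_pos; try apply Rabs_pos; lra).
  assert (Rabs a * c * (Rabs a * c) = a * a * (c * c)).
  { replace (Rabs a * c * (Rabs a * c)) with ((Rabs a * Rabs a) * (c * c)) by ring.
    rewrite <- (Rabs_mult a a). rewrite Rabs_pos_eq by nra. ring. }
  assert (Rabs b * c * (Rabs b * c) = b * b * (c * c)).
  { replace (Rabs b * c * (Rabs b * c)) with ((Rabs b * Rabs b) * (c * c)) by ring.
    rewrite <- (Rabs_mult b b). rewrite Rabs_pos_eq by nra. ring. }
  assert (Rabs (1/5) * c * (Rabs (1/5) * c) = 1/25 * (c * c)).
  { rewrite Rabs_pos_eq by lra. field. }
  assert (Rabs ((1 - 1/5)/2) * c * (Rabs ((1-1/5)/2) * c) = 4/25 * (c * c)).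
  { rewrite Rabs_pos_eq by lra. field. }
  assert (Ha : a = 1 - 2 * b) by lra.
  assert (Hs : a*a+b*b - 1/5 = (5*b-2)*(5*b-2)/5) by (rewrite Ha; field).
  assert (0 <= (5*b - 2)*(5*b - 2)) by apply Rle_0_sqr.
  assert (Hq : 0 <= (a*a+b*b - 1/5) * (c*c)) by (apply Rmult_le_pos; [lra| apply Rle_0_sqr]).
  rewrite H1, H2, H3, H4. lra.

Qed.

Lemma A4_deriv q : 0 < q -> q <> 2 ->
  derivable_pt_lim (fun s => Rpower s q + Rpower ((1 - s) / 2) q) (1/5)
    (q * Rpower (1/5) (q - 1) + q * Rpower ((1 - 1/5) / 2) (q - 1) * (- / 2)).
Proof.
  intros Hq Hq2.
  apply derivable_pt_lim_plus.
  - apply derivable_pt_lim_power. lra.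
  - apply (derivable_pt_lim_comp (fun s => (1 - s) / 2) (fun x => Rpower x q)).
    + replace (- / 2) with ((0 - 1) * / 2) by field. unfold Rdiv.
      apply derivable_pt_lim_scal_right. apply derivable_pt_lim_minus. apply derivable_pt_lim_const. apply derivable_pt_lim_id.
    + apply derivable_pt_lim_power. lra.
Qed.

Lemma A4_deriv_nz q : 0 < q -> q <> 2 ->
  q * Rpower (1/5) (q - 1) + q * Rpower ((1 - 1/5) / 2) (q - 1) * (- / 2) <> 0.
Proof.
  intros Hq Hq2.
  replace ((1 - 1/5)/2) with (2 * (1/5)) by field.
  rewrite <- Rpower_mult_distr by lra.
  assert (Rpower 2 (q - 1) <> 2).
  { intro E. rewrite <- (Rpower_1 2) in E at 2 by lra.
    destruct (Rtotal_order (q - 1) 1) as [L|[L|L]].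
    - pose proof (Rpower_lt 2 _ _ ltac:(lra) L). lra.
    - lra.
    - pose proof (Rpower_lt 2 _ _ ltac:(lra) L). lra. }
  assert (0 < Rpower (1/5) (q - 1)) by (unfold Rpower; apply exp_pos).
  intro E. apply H.
  assert (q * Rpower (1/5) (q-1) * (1 - Rpower 2 (q-1) / 2) = 0) by (rewrite <- E; field).
  apply Rmult_integral in H1. destruct H1. apply Rmult_integral in H1. destruct H1; lra.
  lra.
Qed.

Lemma A4_qne2 p q : ext_pos p -> 0 < q -> q <> 2 -> ~ in_pginv m n A4 (rowN n p (Fin q)) (dagger m n A4).
Proof.
  intros Hp Hq Hq2 [_ Hopt].
  destruct (deriv_descent _ _ _ (1/10) (A4_deriv q Hq Hq2) (A4_deriv_nz q Hq Hq2) ltac:(lra)) as [s [Hs Hlt]].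
  apply Rabs_def2 in Hs. destruct Hs as [Hs1 Hs2].
  specialize (Hopt (X4 s) (X4_G s)).
  rewrite (obj_ext m n p (Fin q) A4 (dagger m n A4) (X4 (1/5))) in Hopt by (intros; apply dagger4; auto).
  rewrite !obj4_X in Hopt by auto.
  apply rpow_le_inv in Hopt; try (apply Rinv_0_lt_compat; auto); try (apply sumR_nonneg; intros; apply rpow_nonneg).
  rewrite !sum_T4 in Hopt.
  pose proof (c4_pos p Hp). set (c := c4 p) in *.
  rewrite !(Rabs_pos_eq) in Hopt by lra.
  rewrite !rpow_mult in Hopt by lra.
  rewrite !rpow_pos in Hopt by lra.
  assert (0 < Rpower c q) by (unfold Rpower; apply exp_pos).
  nra.
Qed.

End A4sec.

Lemma rowN_m1 n A X p q : ext_pos p -> ext_pos q ->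
  rowN n p q (mmul 1 X A) = vnorm n (A 0%nat) p * entN n 1 q X.
Proof.
  intros Hp Hq. unfold rowN, rownorm, entN, entnorm.
  rewrite Nat.mul_1_r.
  rewrite (vnorm_ext n (fun k => X (k / 1)%nat (k mod 1)%nat) (fun k => X k 0%nat)).
  2:{ intros. rewrite Nat.div_1_r, Nat.mod_1_r. auto. }
  rewrite (vnorm_ext n _ (fun i => Rabs (X i 0%nat) * vnorm n (A 0%nat) p)).
  2:{ intros i Hi. rewrite <- vnorm_scal by auto. apply vnorm_ext_abs. intros j Hj.
      unfold mmul. simpl. rewrite Rplus_0_l, !Rabs_mult; try rewrite Rabs_Rabsolu; auto. }
  rewrite (vnorm_ext_abs n _ (fun i => vnorm n (A 0%nat) p * X i 0%nat)).
  2:{ intros. rewrite !Rabs_mult; try rewrite Rabs_Rabsolu; ring. }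
  rewrite vnorm_scal by auto. rewrite Rabs_pos_eq by apply vnorm_nonneg. auto.
Qed.

Lemma alpha_pos n A X p : ext_pos p -> in_G 1 n A X -> 0 < vnorm n (A 0%nat) p.
Proof.
  intros Hp HX. destruct (classic (exists l, (l < n)%nat /\ A 0%nat l <> 0)) as [[l [Hl Hnz]]|Hno].
  - apply (vnorm_pos n _ p l); auto.
  - exfalso. specialize (HX 0%nat 0%nat ltac:(lia) ltac:(lia)). unfold idm in HX. simpl in HX.
    unfold mmul in HX. rewrite sumR_zero in HX. lra.
    intros l Hl. destruct (Req_dec (A 0%nat l) 0). rewrite H; ring. exfalso; apply Hno; eauto.
Qed.

Lemma part_a1 n A p q X : ext_pos p -> ext_pos q ->
  in_pginv 1 n A (rowN n p q) X <-> in_ginv 1 n A (entN n 1 q) X.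
Proof.
  intros Hp Hq. split.
  - intros [HG Hopt]. split; auto. intros Y HY. specialize (Hopt Y HY).
    rewrite !rowN_m1 in Hopt by auto. pose proof (alpha_pos n A X p Hp HG).
    apply Rmult_le_reg_l in Hopt; auto.
  - intros [HG Hopt]. split; auto. intros Y HY. specialize (Hopt Y HY).
    rewrite !rowN_m1 by auto. pose proof (alpha_pos n A X p Hp HG).
    apply Rmult_le_compat_l; lra.
Qed.

Lemma dl_eq f x l1 l2 : derivable_pt_lim f x l1 -> l1 = l2 -> derivable_pt_lim f x l2.
Proof. intros H ->; auto. Qed.

Lemma dl_lin a b : derivable_pt_lim (fun t => a + b * t) 0 b.
Proof.
  apply (dl_eq _ _ (0 + b * 1)); [|ring].
  apply (derivable_pt_lim_plus (fun _ => a) (fun t => b * t)).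
  apply derivable_pt_lim_const. apply derivable_pt_lim_scal. apply derivable_pt_lim_id.
Qed.

Lemma dl_rpow_lin a b p : 0 < a -> derivable_pt_lim (fun t => Rpower (a + b * t) p) 0 (p * Rpower a (p - 1) * b).
Proof.
  intros Ha.
  assert (H2 : derivable_pt_lim (fun x => Rpower x p) (a + b * 0) (p * Rpower (a + b * 0) (p - 1))).
  { apply derivable_pt_lim_power. lra. }
  pose proof (derivable_pt_lim_comp (fun t => a + b * t) (fun x => Rpower x p) 0 b _ (dl_lin a b) H2) as H.
  unfold comp in H. rewrite Rmult_0_r, Rplus_0_r in H. auto.
Qed.

Definition F3 (p a1 b1 a2 b2 a3 b3 : R) (t : R) : R :=
  Rpower (Rpower (a1 + b1 * t) p + Rpower (a2 + b2 * t) p + Rpower (a3 + b3 * t) p) (2 / p).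

Lemma dl_F3 p a1 b1 a2 b2 a3 b3 : 0 < p -> 0 < a1 -> 0 < a2 -> 0 < a3 ->
  derivable_pt_lim (F3 p a1 b1 a2 b2 a3 b3) 0
   (2 / p * Rpower (Rpower a1 p + Rpower a2 p + Rpower a3 p) (2 / p - 1) *
     (p * Rpower a1 (p - 1) * b1 + p * Rpower a2 (p - 1) * b2 + p * Rpower a3 (p - 1) * b3)).
Proof.
  intros Hp H1 H2 H3.
  set (S := fun t => Rpower (a1 + b1 * t) p + Rpower (a2 + b2 * t) p + Rpower (a3 + b3 * t) p).
  assert (HS : derivable_pt_lim S 0 (p * Rpower a1 (p - 1) * b1 + p * Rpower a2 (p - 1) * b2 + p * Rpower a3 (p - 1) * b3)).
  { unfold S. apply (derivable_pt_lim_plus (fun t => Rpower (a1 + b1 * t) p + Rpower (a2 + b2 * t) p) (fun t => Rpower (a3 + b3 * t) p)).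
    apply (derivable_pt_lim_plus (fun t => Rpower (a1 + b1 * t) p) (fun t => Rpower (a2 + b2 * t) p)).
    all: apply dl_rpow_lin; auto. }
  assert (HS0 : S 0 = Rpower a1 p + Rpower a2 p + Rpower a3 p).
  { unfold S. rewrite !Rmult_0_r, !Rplus_0_r. auto. }
  assert (Hpos : 0 < S 0). { rewrite HS0. unfold Rpower. pose proof (exp_pos (p * ln a1)). pose proof (exp_pos (p * ln a2)). pose proof (exp_pos (p * ln a3)). lra. }
  pose proof (derivable_pt_lim_power (S 0) (2 / p) Hpos) as HP.
  pose proof (derivable_pt_lim_comp S (fun x => Rpower x (2 / p)) 0 _ _ HS HP) as H.
  unfold comp in H. rewrite HS0 in H.
  apply (dl_eq _ _ _ _ H). ring.
Qed.

Lemma ln_div' x y : 0 < x -> 0 < y -> ln (x / y) = ln x - ln y.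
Proof. intros. unfold Rdiv. rewrite ln_mult by (auto; apply Rinv_0_lt_compat; auto). rewrite ln_Rinv by auto. ring. Qed.

Lemma Rpower_div u a p : 0 < u -> 0 < a -> Rpower u p / Rpower a p = Rpower (u / a) p.
Proof.
  intros Hu Ha. unfold Rpower. rewrite ln_div' by auto. unfold Rdiv. rewrite <- exp_Ropp, <- exp_plus. f_equal. ring.
Qed.

Lemma lam_form S a p : 0 < S -> 0 < a -> 0 < p ->
  Rpower S (2 / p - 1) * Rpower a (p - 1) = a * Rpower (S / Rpower a p) ((2 - p) / p).
Proof.
  intros HS Ha Hp. unfold Rpower.
  rewrite ln_div' by (auto; apply exp_pos). rewrite ln_exp.
  rewrite <- exp_plus.
  transitivity (exp (ln a) * exp ((2 - p) / p * (ln S - p * ln a))).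
  - rewrite <- exp_plus. f_equal. field. lra.
  - rewrite exp_ln; auto.
Qed.

Lemma Rpower_strict_pos x y e : 0 < x -> x < y -> 0 < e -> Rpower x e < Rpower y e.
Proof. intros. apply Rlt_Rpower_l; lra. Qed.

Lemma Rpower_strict_neg x y e : 0 < x -> x < y -> e < 0 -> Rpower y e < Rpower x e.
Proof.
  intros. unfold Rpower. apply exp_increasing. assert (ln x < ln y) by (apply ln_increasing; lra). nra.
Qed.

Lemma sum3_lt p x1 x2 x3 y1 y2 y3 : 0 < p -> 0 < x1 -> 0 < x2 -> 0 < x3 ->
  x1 <= y1 -> x2 <= y2 -> x3 < y3 ->
  Rpower x1 p + Rpower x2 p + Rpower x3 p < Rpower y1 p + Rpower y2 p + Rpower y3 p.
Proof.
  intros. pose proof (Rle_Rpower_l x1 y1 p ltac:(lra) ltac:(lra)). pose proof (Rle_Rpower_l x2 y2 p ltac:(lra) ltac:(lra)).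
  pose proof (Rlt_Rpower_l x3 y3 p ltac:(lra) ltac:(lra)). lra.
Qed.

Lemma q3 a u1 u2 u3 p : 0 < a -> 0 < u1 -> 0 < u2 -> 0 < u3 ->
  (Rpower u1 p + Rpower u2 p + Rpower u3 p) / Rpower a p = Rpower (u1 / a) p + Rpower (u2 / a) p + Rpower (u3 / a) p.
Proof. intros. rewrite <- !Rpower_div by auto. field. unfold Rpower; apply Rgt_not_eq, exp_pos. Qed.

Definition A5 (i j : nat) : R :=
  match i with
  | O => match j with O => 2 | 1%nat => -1 | _ => 0 end
  | 1%nat => match j with O => 3 | 2%nat => -1 | _ => 0 end
  | _ => if Nat.eqb j (S i) then 1 else 0
  end.

Definition X5 (t : R) (l j : nat) : R :=
  match j with
  | O => match l with O => 2/14 | 1%nat => -10/14 | 2%nat => 6/14 | _ => 0 end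
  | 1%nat => match l with O => (3 - t)/14 | 1%nat => (6 - 2*t)/14 | 2%nat => (-5 - 3*t)/14 | _ => 0 end
  | _ => if Nat.eqb l (S j) then 1 else 0
  end.

Definition isblk (P : nat -> nat -> R) := forall i j, (2 <= i \/ 2 <= j)%nat -> P i j = if Nat.eqb i j then 1 else 0.

Lemma blk_mul m P Q i j : (2 <= m)%nat -> isblk P -> isblk Q -> (i < m)%nat -> (j < m)%nat ->
  mmul m P Q i j = if (Nat.ltb i 2 && Nat.ltb j 2)%bool then P i 0%nat * Q 0%nat j + P i 1%nat * Q 1%nat j
                   else (if Nat.eqb i j then 1 else 0).
Proof.
  intros Hm HP HQ Hi Hj. unfold mmul.
  destruct (Nat.ltb_spec i 2); destruct (Nat.ltb_spec j 2); simpl.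
  - rewrite (sumR_trunc m 2); auto. simpl. ring.
    intros l Hl _. rewrite (HP i l) by lia. destruct (Nat.eqb_spec i l). lia. ring.
  - destruct (Nat.eqb_spec i j); [lia|].
    apply sumR_zero. intros l Hl. destruct (Nat.ltb_spec l 2).
    + rewrite (HQ l j) by lia. destruct (Nat.eqb_spec l j). lia. ring.
    + rewrite (HP i l) by lia. destruct (Nat.eqb_spec i l). lia. ring.
  - rewrite (sumR_single m i); auto.
    + rewrite (HP i i) by lia. rewrite Nat.eqb_refl. rewrite (HQ i j) by lia. ring.
    + intros l _ Hne. rewrite (HP i l) by lia. destruct (Nat.eqb_spec i l). congruence. ring.
  - rewrite (sumR_single m i); auto.
    + rewrite (HP i i) by lia. rewrite Nat.eqb_refl. rewrite (HQ i j) by lia. ring.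
    + intros l _ Hne. rewrite (HP i l) by lia. destruct (Nat.eqb_spec i l). congruence. ring.
Qed.

Definition M5f (i j : nat) : R :=
  match i, j with
  | O, O => 5 | O, 1%nat => 6 | 1%nat, O => 6 | 1%nat, 1%nat => 10
  | _, _ => if Nat.eqb i j then 1 else 0 end.

Definition W5 (i j : nat) : R :=
  match i, j with
  | O, O => 10/14 | O, 1%nat => -6/14 | 1%nat, O => -6/14 | 1%nat, 1%nat => 5/14
  | _, _ => if Nat.eqb i j then 1 else 0 end.

Lemma M5f_blk : isblk M5f.
Proof. intros i j H. unfold M5f. destruct i as [|[|i]]; destruct j as [|[|j]]; auto; lia. Qed.
Lemma W5_blk : isblk W5.
Proof. intros i j H. unfold W5. destruct i as [|[|i]]; destruct j as [|[|j]]; auto; lia. Qed.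

Lemma A5_lo i l : (i < 2)%nat -> (3 <= l)%nat -> A5 i l = 0.
Proof. intros. unfold A5. destruct i as [|[|]]; try lia; destruct l as [|[|[|]]]; auto; lia. Qed.

Lemma A5_hi k l : A5 (S (S k)) l = if Nat.eqb l (S (S (S k))) then 1 else 0.
Proof. reflexivity. Qed.

Section A5sec.
Variables m n : nat.
Hypothesis Hm : (3 <= m)%nat.
Hypothesis Hmn : (m < n)%nat.


Lemma A5_full : full_rank m n A5.
Proof.
  intros c Hc.
  assert (H0 : c 0%nat = 0).
  { specialize (Hc 1%nat ltac:(lia)). rewrite (sumR_single m 0%nat) in Hc. simpl in Hc. lra. lia.
    intros [|[|k]] _ H; [lia| simpl; ring | rewrite A5_hi; simpl; ring]. }
  assert (H1 : c 1%nat = 0).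
  { specialize (Hc 2%nat ltac:(lia)). rewrite (sumR_single m 1%nat) in Hc. simpl in Hc. lra. lia.
    intros [|[|k]] _ H; [simpl; ring| lia | rewrite A5_hi; simpl; ring]. }
  intros [|[|k]] Hk; auto.
  specialize (Hc (S (S (S k))) ltac:(lia)). rewrite (sumR_single m (S (S k))) in Hc.
  - rewrite A5_hi, Nat.eqb_refl in Hc. lra.
  - lia.
  - intros [|[|l]] _ H. rewrite A5_lo by lia; ring. rewrite A5_lo by lia; ring.
    rewrite A5_hi. destruct (Nat.eqb_spec (S (S (S k))) (S (S (S l)))). lia. ring.
Qed.

Lemma M5_eq i j : (i < m)%nat -> (j < m)%nat -> mmul n A5 (tr A5) i j = M5f i j.
Proof.
  intros Hi Hj. unfold mmul, tr.
  destruct (Nat.ltb_spec i 2).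
  - destruct (Nat.ltb_spec j 2).
    + rewrite (sumR_trunc n 3) by (try lia; intros; rewrite A5_lo by lia; ring).
      simpl. destruct i as [|[|]]; destruct j as [|[|]]; try lia; simpl; ring.
    + replace (M5f i j) with 0 by (unfold M5f; destruct i as [|[|]]; destruct j as [|[|]]; try lia; reflexivity).
      apply sumR_zero. intros l Hl. destruct (Nat.ltb_spec l 3).
      * destruct j as [|[|k]]; try lia. rewrite A5_hi. destruct (Nat.eqb_spec l (S (S (S k)))). lia. ring.
      * rewrite A5_lo by lia. ring.
  - destruct i as [|[|k]]; try lia.
    rewrite (sumR_single n (S (S (S k)))).
    + rewrite A5_hi, Nat.eqb_refl. unfold M5f. destruct j as [|[|j]].
      * rewrite A5_lo by lia. simpl. ring.
      * rewrite A5_lo by lia. simpl. ring.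
      * rewrite A5_hi. destruct (Nat.eqb_spec (S (S (S k))) (S (S (S j)))); destruct (Nat.eqb_spec (S (S k)) (S (S j))); try lia; ring.
    + lia.
    + intros l _ Hne. rewrite A5_hi. destruct (Nat.eqb_spec l (S (S (S k)))). congruence. ring.
Qed.

Lemma minv5 : forall i j, (i < m)%nat -> (j < m)%nat -> minv m (mmul n A5 (tr A5)) i j = W5 i j.
Proof.
  apply minv_unique.
  - intros i j Hi Hj. rewrite (mmul_ext_l m _ M5f) by (intros; apply M5_eq; auto).
    rewrite blk_mul by (auto using M5f_blk, W5_blk; lia).
    unfold idm. destruct i as [|[|i]]; destruct j as [|[|j]]; simpl; try field; auto.
  - intros i j Hi Hj. unfold mmul at 1. rewrite (sumR_ext m _ (fun l => W5 i l * M5f l j)) by (intros; rewrite M5_eq; auto).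
    change (mmul m W5 M5f i j = idm i j).
    rewrite blk_mul by (auto using M5f_blk, W5_blk; lia).
    unfold idm. destruct i as [|[|i]]; destruct j as [|[|j]]; simpl; try field; auto.
Qed.

Lemma dagger5 l j : (l < n)%nat -> (j < m)%nat -> dagger m n A5 l j = X5 0 l j.
Proof.
  intros Hl Hj. unfold dagger, mmul at 1.
  rewrite (sumR_ext m _ (fun i => tr A5 l i * W5 i j)) by (intros; rewrite minv5; auto).
  unfold tr. destruct (Nat.ltb_spec j 2).
  - rewrite (sumR_trunc m 2); try lia.
    + simpl. destruct j as [|[|]]; try lia; destruct l as [|[|[|l]]]; simpl; field.
    + intros i Hi _. rewrite W5_blk by lia. destruct (Nat.eqb_spec i j). lia. ring.
  - rewrite (sumR_single m j); auto.
    + rewrite W5_blk by lia. rewrite Nat.eqb_refl. destruct j as [|[|j]]; try lia.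
      rewrite A5_hi. simpl. destruct (Nat.eqb l (S (S (S j)))); ring.
    + intros i _ Hne. rewrite W5_blk by lia. destruct (Nat.eqb_spec i j). congruence. ring.
Qed.

Lemma X5_G t : in_G m n A5 (X5 t).
Proof.
  intros k j Hk Hj. unfold mmul. destruct (Nat.ltb_spec k 2).
  - rewrite (sumR_trunc n 3) by (try lia; intros; rewrite A5_lo by lia; ring).
    simpl. unfold idm. destruct j as [|[|j]].
    + destruct k as [|[|]]; try lia; simpl; field.
    + destruct k as [|[|]]; try lia; simpl; field.
    + destruct k as [|[|]]; try lia; simpl; ring.
  - destruct k as [|[|k]]; try lia.
    rewrite (sumR_single n (S (S (S k)))).
    + rewrite A5_hi, Nat.eqb_refl. unfold X5, idm. destruct j as [|[|j]]; simpl; try ring.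
      destruct (Nat.eqb_spec k j); destruct (Nat.eqb_spec (S (S (S k))) (S (S (S j)))); try lia; ring.
    + intros l _ Hne. rewrite A5_hi. destruct (Nat.eqb_spec l (S (S (S k)))). congruence. ring.
Qed.

Lemma dagger5_G : in_G m n A5 (dagger m n A5).
Proof. apply (inG_ext m n A5 (X5 0)). intros; symmetry; apply dagger5; auto. apply X5_G. Qed.

Lemma X5A_lo t i j : (i < 3)%nat -> mmul m (X5 t) A5 i j = X5 t i 0%nat * A5 0%nat j + X5 t i 1%nat * A5 1%nat j.
Proof.
  intros Hi. unfold mmul. rewrite (sumR_trunc m 2). simpl. ring. lia.
  intros [|[|l]] Hl _; try lia. unfold X5. destruct (Nat.eqb_spec i (S (S (S l)))). lia. ring.
Qed.

Lemma X5A_mid t i j : (3 <= i <= m)%nat -> mmul m (X5 t) A5 i j = if Nat.eqb j i then 1 else 0.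
Proof.
  intros Hi. destruct i as [|[|[|k]]]; try lia. unfold mmul.
  rewrite (sumR_single m (S (S k))).
  - unfold X5. rewrite Nat.eqb_refl. rewrite A5_hi. ring.
  - lia.
  - intros [|[|l]] _ H; unfold X5; try (simpl; ring).
    destruct (Nat.eqb_spec (S (S (S k))) (S (S (S l)))). lia. ring.
Qed.

Lemma X5A_high t i j : (m < i)%nat -> mmul m (X5 t) A5 i j = 0.
Proof.
  intros Hi. unfold mmul. apply sumR_zero. intros [|[|l]] Hl; unfold X5.
  - destruct i as [|[|[|]]]; try lia; ring.
  - destruct i as [|[|[|]]]; try lia; ring.
  - destruct (Nat.eqb_spec i (S (S (S l)))). lia. ring.
Qed.

End A5sec.

Lemma Rpower_pos' x y : 0 < Rpower x y.
Proof. unfold Rpower; apply exp_pos. Qed.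

Lemma row3_sq n p (e : nat -> R) a1 b1 a2 b2 a3 b3 t : (3 <= n)%nat -> 0 < p ->
  (forall j, (3 <= j)%nat -> (j < n)%nat -> e j = 0) ->
  Rabs (e 0%nat) = (a1 + b1 * t) / 14 -> Rabs (e 1%nat) = (a2 + b2 * t) / 14 -> Rabs (e 2%nat) = (a3 + b3 * t) / 14 ->
  0 < a1 + b1 * t -> 0 < a2 + b2 * t -> 0 < a3 + b3 * t ->
  rpow (vnorm n e (Fin p)) 2 = F3 p a1 b1 a2 b2 a3 b3 t / Rpower (Rpower 14 p) (2 / p).
Proof.
  intros Hn Hp Hz E0 E1 E2 P1 P2 P3. simpl.
  rewrite (sumR_trunc n 3) by (auto; intros; rewrite Hz, Rabs_R0 by auto; apply rpow_zero; lra).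
  simpl. rewrite E0, E1, E2.
  rewrite (rpow_pos ((a1 + b1 * t) / 14)) by (apply Rdiv_lt_0_compat; lra).
  rewrite (rpow_pos ((a2 + b2 * t) / 14)) by (apply Rdiv_lt_0_compat; lra).
  rewrite (rpow_pos ((a3 + b3 * t) / 14)) by (apply Rdiv_lt_0_compat; lra).
  rewrite <- !Rpower_div by lra.
  set (S := Rpower (a1 + b1 * t) p + Rpower (a2 + b2 * t) p + Rpower (a3 + b3 * t) p).
  assert (HS : 0 < S) by (unfold S; pose proof (Rpower_pos' (a1 + b1 * t) p); pose proof (Rpower_pos' (a2 + b2 * t) p); pose proof (Rpower_pos' (a3 + b3 * t) p); lra).
  pose proof (Rpower_pos' 14 p) as HC.
  replace (0 + Rpower (a1 + b1 * t) p / Rpower 14 p + Rpower (a2 + b2 * t) p / Rpower 14 p + Rpower (a3 + b3 * t) p / Rpower 14 p)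
    with (S / Rpower 14 p) by (unfold S; field; lra).
  rewrite rpow_rpow by (apply Rlt_le, Rdiv_lt_0_compat; lra).
  rewrite rpow_pos by (apply Rdiv_lt_0_compat; lra).
  replace (/ p * 2) with (2 / p) by (field; lra).
  rewrite <- Rpower_div by auto. unfold F3. fold S. auto.
Qed.

Lemma Rabs_eq_pos x y : 0 <= x -> x = y -> Rabs x = y.
Proof. intros. subst. apply Rabs_pos_eq; auto. Qed.
Lemma Rabs_eq_neg x y : x <= 0 -> - x = y -> Rabs x = y.
Proof. intros. subst. apply Rabs_left1; auto. Qed.

Section A5obj.
Variables m n : nat.
Hypothesis Hm : (3 <= m)%nat.
Hypothesis Hmn : (m < n)%nat.
Variable p : R.
Hypothesis Hp : 1 <= p.

Definition g5 (t : R) : R :=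
  F3 p 13 (-3) 2 0 3 (-1) t + F3 p 2 6 10 0 6 (-2) t + F3 p 3 9 6 0 5 3 t.

Definition K5 : R := Rpower (Rpower 14 p) (2 / p).

Definition tail5 : R := sumR (n - 3) (fun i => rpow (if Nat.leb (3 + i) m then 1 else 0) 2).

Lemma e_hi t i j : (3 <= j)%nat -> X5 t i 0%nat * A5 0%nat j + X5 t i 1%nat * A5 1%nat j = 0.
Proof. intros. rewrite !A5_lo by lia. ring. Qed.

Lemma sum5 t : -1/4 < t < 1/4 ->
  sumR n (fun i => rpow (vnorm n (mmul m (X5 t) A5 i) (Fin p)) 2) = g5 t / K5 + tail5.
Proof.
  intros Ht. rewrite (sumR_split n 3) by lia. unfold tail5, g5, K5.
  f_equal.
  - cbn [sumR]. rewrite Rplus_0_l.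
    rewrite (vnorm_ext n _ (fun j => X5 t 0%nat 0%nat * A5 0%nat j + X5 t 0%nat 1%nat * A5 1%nat j)) by (intros; apply (X5A_lo m n Hm Hmn); lia).
    rewrite (vnorm_ext n (mmul m (X5 t) A5 1%nat) (fun j => X5 t 1%nat 0%nat * A5 0%nat j + X5 t 1%nat 1%nat * A5 1%nat j)) by (intros; apply (X5A_lo m n Hm Hmn); lia).
    rewrite (vnorm_ext n (mmul m (X5 t) A5 2%nat) (fun j => X5 t 2%nat 0%nat * A5 0%nat j + X5 t 2%nat 1%nat * A5 1%nat j)) by (intros; apply (X5A_lo m n Hm Hmn); lia).
    rewrite (row3_sq n p _ 13 (-3) 2 0 3 (-1) t); try lia; try lra; try (intros; apply e_hi; lia).
    rewrite (row3_sq n p _ 2 6 10 0 6 (-2) t); try lia; try lra; try (intros; apply e_hi; lia).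
    rewrite (row3_sq n p _ 3 9 6 0 5 3 t); try lia; try lra; try (intros; apply e_hi; lia).
    all: try (simpl; first [apply Rabs_eq_pos; [lra|field] | apply Rabs_eq_neg; [lra|field]]).
  - apply sumR_ext. intros i Hi. f_equal. destruct (Nat.leb_spec (3 + i) m).
    + rewrite (vnorm_ext n _ (fun j => if Nat.eqb j (3 + i) then 1 else 0)) by (intros; apply (X5A_mid m n Hm Hmn); lia).
      apply vnorm_unit. lia. simpl; lra.
    + apply vnorm_zero. intros. apply (X5A_high m n Hm Hmn). lia.
Qed.

Lemma obj5 t : -1/4 < t < 1/4 ->
  rowN n (Fin p) (Fin 2) (mmul m (X5 t) A5) = rpow (g5 t / K5 + tail5) (/ 2).
Proof. intros. rewrite rowN_fin. rewrite sum5; auto. Qed.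

End A5obj.

Lemma dval p a1 a2 a3 b1 b2 b3 : 0 < p -> 0 < a1 -> 0 < a2 -> 0 < a3 ->
  let S := Rpower a1 p + Rpower a2 p + Rpower a3 p in
  2 / p * Rpower S (2 / p - 1) * (p * Rpower a1 (p - 1) * b1 + p * Rpower a2 (p - 1) * b2 + p * Rpower a3 (p - 1) * b3)
  = 2 * (b1 * (a1 * Rpower (S / Rpower a1 p) ((2 - p) / p)) + b2 * (a2 * Rpower (S / Rpower a2 p) ((2 - p) / p))
         + b3 * (a3 * Rpower (S / Rpower a3 p) ((2 - p) / p))).
Proof.
  intros Hp H1 H2 H3 S.
  assert (HS : 0 < S) by (unfold S; pose proof (Rpower_pos' a1 p); pose proof (Rpower_pos' a2 p); pose proof (Rpower_pos' a3 p); lra).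
  rewrite <- !lam_form by auto. field. lra.
Qed.

Lemma g5_deriv p : 1 <= p ->
  derivable_pt_lim (g5 p) 0
   (2 / p * Rpower (Rpower 13 p + Rpower 2 p + Rpower 3 p) (2 / p - 1) *
     (p * Rpower 13 (p - 1) * (-3) + p * Rpower 2 (p - 1) * 0 + p * Rpower 3 (p - 1) * (-1))
  + 2 / p * Rpower (Rpower 2 p + Rpower 10 p + Rpower 6 p) (2 / p - 1) *
     (p * Rpower 2 (p - 1) * 6 + p * Rpower 10 (p - 1) * 0 + p * Rpower 6 (p - 1) * (-2))
  + 2 / p * Rpower (Rpower 3 p + Rpower 6 p + Rpower 5 p) (2 / p - 1) *
     (p * Rpower 3 (p - 1) * 9 + p * Rpower 6 (p - 1) * 0 + p * Rpower 5 (p - 1) * 3)).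
Proof.
  intros Hp. unfold g5.
  apply (derivable_pt_lim_plus (fun t => F3 p 13 (-3) 2 0 3 (-1) t + F3 p 2 6 10 0 6 (-2) t) (F3 p 3 9 6 0 5 3)).
  apply (derivable_pt_lim_plus (F3 p 13 (-3) 2 0 3 (-1)) (F3 p 2 6 10 0 6 (-2))).
  all: apply dl_F3; lra.
Qed.

Lemma g5_deriv_nz p : 1 <= p -> p <> 2 ->
  2 / p * Rpower (Rpower 13 p + Rpower 2 p + Rpower 3 p) (2 / p - 1) *
     (p * Rpower 13 (p - 1) * (-3) + p * Rpower 2 (p - 1) * 0 + p * Rpower 3 (p - 1) * (-1))
  + 2 / p * Rpower (Rpower 2 p + Rpower 10 p + Rpower 6 p) (2 / p - 1) *
     (p * Rpower 2 (p - 1) * 6 + p * Rpower 10 (p - 1) * 0 + p * Rpower 6 (p - 1) * (-2))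
  + 2 / p * Rpower (Rpower 3 p + Rpower 6 p + Rpower 5 p) (2 / p - 1) *
     (p * Rpower 3 (p - 1) * 9 + p * Rpower 6 (p - 1) * 0 + p * Rpower 5 (p - 1) * 3) <> 0.
Proof.
  intros Hp Hp2.
  rewrite (dval p 13 2 3) by lra. rewrite (dval p 2 10 6) by lra. rewrite (dval p 3 6 5) by lra.
  set (e := (2 - p) / p).
  set (S0 := Rpower 13 p + Rpower 2 p + Rpower 3 p).
  set (S1 := Rpower 2 p + Rpower 10 p + Rpower 6 p).
  set (S2 := Rpower 3 p + Rpower 6 p + Rpower 5 p).
  assert (Hq013 : S0 / Rpower 13 p = Rpower (13/13) p + Rpower (2/13) p + Rpower (3/13) p) by (apply q3; lra).
  assert (Hq03 : S0 / Rpower 3 p = Rpower (13/3) p + Rpower (2/3) p + Rpower (3/3) p) by (apply q3; lra).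
  assert (Hq12 : S1 / Rpower 2 p = Rpower (2/2) p + Rpower (10/2) p + Rpower (6/2) p) by (apply q3; lra).
  assert (Hq16 : S1 / Rpower 6 p = Rpower (2/6) p + Rpower (10/6) p + Rpower (6/6) p) by (apply q3; lra).
  assert (Hq23 : S2 / Rpower 3 p = Rpower (3/3) p + Rpower (6/3) p + Rpower (5/3) p) by (apply q3; lra).
  assert (Hq25 : S2 / Rpower 5 p = Rpower (3/5) p + Rpower (6/5) p + Rpower (5/5) p) by (apply q3; lra).
  assert (C1 : S0 / Rpower 3 p < S1 / Rpower 2 p).
  { rewrite Hq03, Hq12. pose proof (sum3_lt p (3/3) (2/3) (13/3) (2/2) (6/2) (10/2)). lra. }
  assert (C2 : S1 / Rpower 6 p < S2 / Rpower 3 p).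
  { rewrite Hq16, Hq23. pose proof (sum3_lt p (6/6) (10/6) (2/6) (3/3) (5/3) (6/3)). lra. }
  assert (C3 : S0 / Rpower 13 p < S1 / Rpower 2 p).
  { rewrite Hq013, Hq12. pose proof (sum3_lt p (13/13) (2/13) (3/13) (2/2) (10/2) (6/2)). lra. }
  assert (C4 : S0 / Rpower 13 p < S2 / Rpower 3 p).
  { rewrite Hq013, Hq23. pose proof (sum3_lt p (13/13) (2/13) (3/13) (3/3) (6/3) (5/3)). lra. }
  assert (C5 : S0 / Rpower 13 p < S2 / Rpower 5 p).
  { rewrite Hq013, Hq25. pose proof (sum3_lt p (13/13) (2/13) (3/13) (5/5) (3/5) (6/5)). lra. }
  assert (Pos : forall x, 0 < Rpower (x / 13) p) by (intros; apply Rpower_pos').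
  assert (P013 : 0 < S0 / Rpower 13 p) by (rewrite Hq013; pose proof (Rpower_pos' (13/13) p); pose proof (Rpower_pos' (2/13) p); pose proof (Rpower_pos' (3/13) p); lra).
  assert (P03 : 0 < S0 / Rpower 3 p) by (rewrite Hq03; pose proof (Rpower_pos' (13/3) p); pose proof (Rpower_pos' (2/3) p); pose proof (Rpower_pos' (3/3) p); lra).
  assert (P16 : 0 < S1 / Rpower 6 p) by (rewrite Hq16; pose proof (Rpower_pos' (2/6) p); pose proof (Rpower_pos' (10/6) p); pose proof (Rpower_pos' (6/6) p); lra).
  clearbody S0 S1 S2.
  set (x013 := S0 / Rpower 13 p) in *. set (x03 := S0 / Rpower 3 p) in *.
  set (x12 := S1 / Rpower 2 p) in *. set (x16 := S1 / Rpower 6 p) in *.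
  set (x23 := S2 / Rpower 3 p) in *. set (x25 := S2 / Rpower 5 p) in *.
  destruct (Rlt_le_dec p 2) as [Lt|Ge].
  - assert (He : 0 < e) by (unfold e; apply Rdiv_lt_0_compat; lra).
    pose proof (Rpower_strict_pos x03 x12 e P03 C1 He).
    pose proof (Rpower_strict_pos x16 x23 e P16 C2 He).
    pose proof (Rpower_strict_pos x013 x12 e P013 C3 He).
    pose proof (Rpower_strict_pos x013 x23 e P013 C4 He).
    pose proof (Rpower_strict_pos x013 x25 e P013 C5 He).
    lra.
  - assert (He : e < 0) by (unfold e; assert (2 - p < 0) by lra; apply Rdiv_neg_pos; lra).
    pose proof (Rpower_strict_neg x03 x12 e P03 C1 He).
    pose proof (Rpower_strict_neg x16 x23 e P16 C2 He).
    pose proof (Rpower_strict_neg x013 x12 e P013 C3 He).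
    pose proof (Rpower_strict_neg x013 x23 e P013 C4 He).
    pose proof (Rpower_strict_neg x013 x25 e P013 C5 He).
    lra.
Qed.

Lemma A5_pne2 m n p : (3 <= m)%nat -> (m < n)%nat -> 1 <= p -> p <> 2 ->
  ~ in_pginv m n A5 (rowN n (Fin p) (Fin 2)) (dagger m n A5).
Proof.
  intros Hm Hmn Hp Hp2 [_ Hopt].
  destruct (deriv_descent _ _ _ (1/4) (g5_deriv p Hp) (g5_deriv_nz p Hp Hp2) ltac:(lra)) as [t [Ht Hlt]].
  rewrite Rminus_0_r in Ht. apply Rabs_def2 in Ht.
  specialize (Hopt (X5 t) (X5_G m n Hm Hmn t)).
  rewrite (obj_ext m n (Fin p) (Fin 2) A5 (dagger m n A5) (X5 0)) in Hopt by (intros; apply (dagger5 m n Hm Hmn); auto).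
  rewrite (obj5 m n Hm Hmn p Hp 0) in Hopt by lra.
  rewrite (obj5 m n Hm Hmn p Hp t) in Hopt by lra.
  assert (HK : 0 < K5 p) by apply Rpower_pos'.
  assert (N0 : 0 <= tail5 m n) by (unfold tail5; apply sumR_nonneg; intros; apply rpow_nonneg).
  assert (G0 : 0 <= g5 p t) by (unfold g5, F3; pose proof (Rpower_pos' (Rpower (13 + -3 * t) p + Rpower (2 + 0 * t) p + Rpower (3 + -1 * t) p) (2/p)); pose proof (Rpower_pos' (Rpower (2 + 6 * t) p + Rpower (10 + 0 * t) p + Rpower (6 + -2 * t) p) (2/p)); pose proof (Rpower_pos' (Rpower (3 + 9 * t) p + Rpower (6 + 0 * t) p + Rpower (5 + 3 * t) p) (2/p)); lra).
  assert (G1 : 0 <= g5 p 0) by (unfold g5, F3; pose proof (Rpower_pos' (Rpower (13 + -3 * 0) p + Rpower (2 + 0 * 0) p + Rpower (3 + -1 * 0) p) (2/p)); pose proof (Rpower_pos' (Rpower (2 + 6 * 0) p + Rpower (10 + 0 * 0) p + Rpower (6 + -2 * 0) p) (2/p)); pose proof (Rpower_pos' (Rpower (3 + 9 * 0) p + Rpower (6 + 0 * 0) p + Rpower (5 + 3 * 0) p) (2/p)); lra).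
  apply rpow_le_inv in Hopt; try lra.
  - assert (g5 p 0 / K5 p <= g5 p t / K5 p) by lra.
    unfold Rdiv in H. apply Rmult_le_reg_r in H. lra. apply Rinv_0_lt_compat; auto.
  - apply Rplus_le_le_0_compat; auto. unfold Rdiv; apply Rmult_le_pos; auto; left; apply Rinv_0_lt_compat; auto.
  - apply Rplus_le_le_0_compat; auto. unfold Rdiv; apply Rmult_le_pos; auto; left; apply Rinv_0_lt_compat; auto.
Qed.

Theorem theorem4 (m n : nat) (Hm : (1 <= m)%nat) (Hmn : (m < n)%nat) :
  (* (a) *)
  (m = 1%nat ->
     (forall (A : mat) (p q : ext), ext_pos p -> ext_pos q ->
        forall X : mat, in_pginv m n A (rowN n p q) X <-> in_ginv m n A (entN n m q) X)
     /\
     (exists A1 : mat, full_rank m n A1 /\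
        forall (p : ext) (q : R), ext_pos p -> 0 < q ->
          (in_pginv m n A1 (rowN n p (Fin q)) (dagger m n A1) <-> q = 2)))
  /\
  (* (b) *)
  ((2 <= m)%nat ->
     exists A4 : mat, full_rank m n A4 /\
       forall p q : R, 1 <= p -> 0 < q ->
         (in_pginv m n A4 (rowN n (Fin p) (Fin q)) (dagger m n A4) <-> q = 2))
  /\
  (* (c) *)
  ((3 <= m)%nat ->
     exists A5 : mat, full_rank m n A5 /\
       forall p : R, 1 <= p ->
         (in_pginv m n A5 (rowN n (Fin p) (Fin 2)) (dagger m n A5) <-> p = 2))
  /\
  (* (d) *)
  ((3 <= m)%nat ->
     forall p q : R, 1 <= p -> 0 < q ->
       ((forall A : mat, full_rank m n A ->
           in_pginv m n A (rowN n (Fin p) (Fin q)) (dagger m n A))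
        <-> (p = 2 /\ q = 2))).
Proof.
  assert (KA4 : forall p q, ext_pos p -> 0 < q ->
            (in_pginv m n A4 (rowN n p (Fin q)) (dagger m n A4) <-> q = 2)).
  { intros p q Hp Hq. split.
    - intros H. destruct (Req_dec q 2); auto. exfalso. exact (A4_qne2 m n Hm Hmn p q Hp Hq H0 H).
    - intros ->. apply A4_q2; auto. }
  split; [|split; [|split]].
  - intros Hm1. split.
    + intros A p q Hp Hq X. subst m. apply part_a1; auto.
    + exists A4. split. apply A4_full; auto. intros p q Hp Hq. apply KA4; auto.
  - intros Hm2. exists A4. split. apply A4_full; auto. intros p q Hp Hq. apply KA4; auto. simpl; lra.
  - intros Hm3. exists A5. split. apply A5_full; auto. intros p Hp. split.
    + intros H. destruct (Req_dec p 2); auto. exfalso. exact (A5_pne2 m n p Hm3 Hmn Hp H0 H).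
    + intros ->. apply dagger_opt22. apply A5_full; auto.
  - intros Hm3 p q Hp Hq. split.
    + intros H.
      assert (Hq2 : q = 2).
      { apply (KA4 (Fin p) q); auto. simpl; lra. apply H. apply A4_full; auto. }
      subst q. split; auto.
      destruct (Req_dec p 2); auto. exfalso. apply (A5_pne2 m n p Hm3 Hmn Hp H0). apply H. apply A5_full; auto.
    + intros [-> ->] A HA. apply dagger_opt22; auto.
Qed.
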